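(* Let $G$ and $H$ be rooted graphs. Then for any integers $g,j\ge 0$ and $h\ge 1$, \begin{align*} X_{S_j^{gh}(G,H)}&=\sum_{i=0}^{j}X_{P_i}\,X_{P^{g+h+j-i}(G,H)}-\sum_{i=1}^{j}X_{G^{g+i-1}}\,X_{H^{h+j-i}},\quad\text{and}\\ X_{S_{hj}^{g}(G)}&=\sum_{i=0}^{j}X_{P_i}\,X_{G^{g+j-i+h}}-\sum_{i=1}^{j}X_{P_{i+h}}\,X_{G^{g+j-i}}. \end{align*}
   Context: All graphs are finite simple graphs. The chromatic symmetric function of a graph $G$ is $X_G=\sum_{\kappa}\prod_{v\in V(G)}x_{\kappa(v)}$, where $\kappa$ ranges over proper colorings $\kappa:V(G)\to\{1,2,\dots\}$; the empty graph has $X=1$. $P_i$ is the path on $i$ vertices ($P_0$ empty). For nonnegative integers $\tau_1,\tau_2,\tau_3$ and rooted graphs $(G_i,u_i)$, $S^{\tau_1\tau_2\tau_3}(G_1,G_2,G_3)$ is obtained by taking a center vertex $c$ and three paths from $c$, disjoint except at $c$, of lengths $\tau_1,\tau_2,\tau_3$, and identifying $u_i$ with the far end of the $i$-th path (with $c$ if $\tau_i=0$), the $G_i$ being disjoint. Notation: $S_j^{gh}(G,H)=S^{ghj}(G,H,K_1)$ and $S_{hj}^g(G)=S^{ghj}(G,K_1,K_1)$ (legs ending in a single vertex are plain paths). For rooted graphs $(G,u)$, $(H,v)$ and $k\ge0$, $P^k(G,H)$ is obtained from the disjoint union of $G$ and $H$ by adding a path of length $k$ joining $u$ and $v$ (for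 $k=0$ identifying them), and $G^k=P^k(G,K_1)$ is $G$ with a pendant path of length $k$ at its root. *)

(* Defs.v *)
From HB Require Import structures.
From mathcomp Require Import all_boot all_algebra.
From mathcomp Require Import mpoly.

Set Implicit Arguments.
Unset Strict Implicit.
Unset Printing Implicit Defensive.

Import GRing.Theory.
Local Open Scope ring_scope.

(* A (finite) graph: a finite vertex type with an adjacency relation.
   Simplicity (symmetric, irreflexive) is imposed as hypotheses where needed. *)
Record graph := Graph { vert : finType; adj : rel vert }.

Record rooted_graph := RGraph { rg :> graph; root : vert rg }.

Definition proper (G : graph) (N : nat) (k : {ffun vert G -> 'I_N}) : bool :=
  [forall u, forall v, adj u v ==> (k u != k v)].

(* Chromatic symmetric function X_G, specialised to the N variables x_1..x_N
   (x_i written 'X_i, i : 'I_N).  X_G is determined by these specialisations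
   for all N. *)
Definition X (N : nat) (G : graph) : {mpoly int[N]} :=
  \sum_(k : {ffun vert G -> 'I_N} | proper k) \prod_(v : vert G) 'X_(k v).

Definition K1 : rooted_graph := @RGraph (@Graph unit (fun _ _ => false)) tt.

Definition P (n : nat) : graph :=
  @Graph ('I_n : finType) (fun i j => (i.+1 == j)%N || (j.+1 == i)%N).

(* Path P_{k+1} (length k) rooted at its end 0. *)
Definition Pr (k : nat) : rooted_graph := @RGraph (P k.+1) ord0.

(* Gluing: disjoint union of A and B with root B identified with root A. *)
Section Glue.
Variables A B : rooted_graph.

Definition glue_vert : finType :=
  (vert A + {x : vert B | x != root B})%type.

Definition inA (x : vert A) : glue_vert := inl x.

Definition inB (x : vert B) : glue_vert :=
  match @insub _ (fun y : vert B => y != root B) _ x with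
  | Some y => inr y
  | None => inl (root A)
  end.

Definition glue_adj : rel glue_vert := fun u v =>
  [exists x, exists y, [&& inA x == u, inA y == v & adj x y]] ||
  [exists x, exists y, [&& inB x == u, inB y == v & adj x y]].

Definition glue_graph : graph := @Graph glue_vert glue_adj.

Definition glue : rooted_graph := @RGraph glue_graph (inA (root A)).
End Glue.

(* G with a pendant path of length k at its root, rooted at the far end
   of the path (the root of G if k = 0).  As an unrooted graph this is G^k. *)
Definition pendant (G : rooted_graph) (k : nat) : rooted_graph :=
  @RGraph (glue_graph G (Pr k)) (@inB G (Pr k) ord_max).

(* G^k = P^k(G, K_1). *)
Definition Gpow (G : rooted_graph) (k : nat) : graph := pendant G k.

(* P^k(G,H): a path of length k joining root G and root H. *)
Definition Pk (k : nat) (G H : rooted_graph) : graph := glue_graph (pendant G k) H.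

(* Spider S^{t1 t2 t3}(G1,G2,G3): centre c, three legs of lengths t1,t2,t3
   ending at (identified with) the roots of G1,G2,G3. *)
Definition spider (t1 t2 t3 : nat) (G1 G2 G3 : rooted_graph) : graph :=
  glue_graph (glue (pendant G1 t1) (pendant G2 t2)) (pendant G3 t3).

(* S_j^{gh}(G,H) = S^{ghj}(G,H,K_1) and S_{hj}^g(G) = S^{ghj}(G,K_1,K_1). *)
Definition S2 (g h j : nat) (G H : rooted_graph) : graph := spider g h j G H K1.
Definition S1 (g h j : nat) (G : rooted_graph) : graph := spider g h j G K1 K1.

Definition simple (G : graph) : Prop :=
  ssrbool.symmetric (@adj G) /\ irreflexive (@adj G).

(* Main.v *)
Require Import Defs.
From HB Require Import structures.
From mathcomp Require Import all_boot all_algebra.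
From mathcomp Require Import mpoly.
From mathcomp Require Import ring zify.
Import GRing.Theory.
Local Open Scope ring_scope.

Set Implicit Arguments.
Unset Strict Implicit.
Unset Printing Implicit Defensive.

Section Main.
Variable N : nat.
Local Notation R := {mpoly int[N]}.
Definition xx (c : 'I_N) : R := 'X_c.

Lemma xx_neq0 c : xx c != 0.
Proof.
apply/eqP => H; have := mcoeffXU int c c; rewrite -/(xx c) H mcoeff0 eqxx.
by move/eqP; rewrite eq_sym oner_eq0.
Qed.

Definition Fw (G : graph) (v : vert G) (c : 'I_N) : R :=
  \sum_(k : {ffun vert G -> 'I_N} | Defs.proper k && (k v == c)) \prod_u xx (k u).
Definition Fr (G : graph) (v : vert G) (c : 'I_N) : R :=
  \sum_(k : {ffun vert G -> 'I_N} | Defs.proper k && (k v == c)) \prod_(u | u != v) xx (k u).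
Definition U (G : graph) (r y : vert G) (d c : 'I_N) : R :=
  \sum_(k : {ffun vert G -> 'I_N} | [&& Defs.proper k, k r == d & k y == c])
     \prod_(u | u != r) xx (k u).

Lemma X_Fw (G : graph) (v : vert G) : X N G = \sum_c Fw v c.
Proof. by rewrite /X (partition_big (fun k : {ffun vert G -> 'I_N} => k v) predT). Qed.

Lemma Fw_Fr (G : graph) (v : vert G) c : Fw v c = xx c * @Fr G v c.
Proof.
rewrite /Fw /Fr mulr_sumr; apply: eq_bigr => k /andP[_ /eqP <-].
by rewrite (bigD1 v).
Qed.

Lemma U_rr (G : graph) (r : vert G) d c : @U G r r d c = (d == c)%:R * Fr r d.
Proof.
rewrite /U /Fr; case: eqP => [<-|ne]; first rewrite mul1r.
  by apply: eq_bigl => k; rewrite andbb.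
rewrite mul0r big1 // => k /and3P[_ /eqP -> /eqP]; done.
Qed.

Lemma Fr_U (G : graph) (r y : vert G) d : @Fr G r d = \sum_c U r y d c.
Proof.
rewrite /Fr (partition_big (fun k : {ffun vert G -> 'I_N} => k y) predT) //.
apply: eq_bigr => c _; apply: eq_bigl => k; by rewrite andbA.
Qed.

Lemma X_U (G : graph) (r y : vert G) : X N G = \sum_d \sum_c xx d * @U G r y d c.
Proof.
rewrite (X_Fw r); apply: eq_bigr => d _; rewrite Fw_Fr (Fr_U r y) mulr_sumr //.
Qed.

Lemma Fr_single (G : graph) (v : vert G) d :
  (forall u, u = v) -> ~~ adj v v -> Fr v d = 1.
Proof.
move=> allv nadj; rewrite /Fr (big_pred1 [ffun _ => d]).
  by rewrite big_pred0 // => u; rewrite (allv u) eqxx.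
move=> k /=; apply/andP/eqP => [[_ /eqP kv]|->].
  by apply/ffunP => u; rewrite ffunE (allv u).
split; last by rewrite ffunE.
by apply/forallP => u; apply/forallP => w; rewrite (allv u) (allv w) (negbTE nadj).
Qed.


Section GlueL.
Variables A B : rooted_graph.
Local Notation gv := (glue_vert A B).
Local Notation fA := {ffun vert A -> 'I_N}.
Local Notation fB := {ffun vert B -> 'I_N}.

Lemma big_sig_neq (T : finType) (r : T) (F : T -> R) :
  \prod_(y : {x : T | x != r}) F (val y) = \prod_(x | x != r) F x.
Proof.
rewrite [RHS](reindex_omap (val : {x : T | x != r} -> T) insub); last first.
  by move=> i Pi; rewrite insubT.
by apply: eq_bigl => -[i iA] /=; rewrite insubT iA /= eqxx.
Qed.

Lemma inB_root : inB A (Defs.root B) = inA B (Defs.root A).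
Proof. by rewrite /inB insubF //= eqxx. Qed.

Lemma inB_val (y : {x : vert B | x != Defs.root B}) : inB A (val y) = inr y.
Proof. by rewrite /inB valK. Qed.

Definition join (p : fA * fB) : {ffun gv -> 'I_N} :=
  [ffun u => match u with inl x => p.1 x | inr y => p.2 (val y) end].
Definition splt (k : {ffun gv -> 'I_N}) : fA * fB :=
  ([ffun x => k (inA B x)], [ffun y => k (inB A y)]).

Lemma join_splt k : join (splt k) = k.
Proof. by apply/ffunP => -[x|y]; rewrite ffunE /= ffunE ?inB_val. Qed.

Lemma splt_join p : (splt (join p) == p) = (p.1 (Defs.root A) == p.2 (Defs.root B)).
Proof.
case: p => kA kB /=; rewrite /splt xpair_eqE.
have -> : [ffun x => join (kA, kB) (inA B x)] = kA by apply/ffunP => x; rewrite !ffunE.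
rewrite eqxx /=; apply/eqP/eqP => [<-|E].
  by rewrite !ffunE inB_root.
apply/ffunP => y; rewrite !ffunE; case: (y =P Defs.root B) => [->|ne].
  by rewrite inB_root.
by rewrite /inB insubT ?ffunE //=; apply/eqP.
Qed.

Lemma join_cons (p : fA * fB) : p.1 (Defs.root A) = p.2 (Defs.root B) -> splt (join p) = p.
Proof. by move=> E; apply/eqP; rewrite splt_join E. Qed.

Lemma proper_glue (k : {ffun gv -> 'I_N}) :
  @Defs.proper (glue_graph A B) N k = Defs.proper (splt k).1 && Defs.proper (splt k).2.
Proof.
apply/idP/andP => [/forallP H|[/forallP HA /forallP HB]].
  split; apply/forallP => x; apply/forallP => y; apply/implyP => axy; rewrite !ffunE.
    have := H (inA B x) => /forallP/(_ (inA B y))/implyP; apply.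
    by apply/orP; left; apply/existsP; exists x; apply/existsP; exists y; rewrite !eqxx.
  have := H (inB A x) => /forallP/(_ (inB A y))/implyP; apply.
  by apply/orP; right; apply/existsP; exists x; apply/existsP; exists y; rewrite !eqxx.
apply/forallP => u; apply/forallP => v; apply/implyP => /orP[] /existsP[x] /existsP[y]
  /and3P[/eqP <- /eqP <- axy].
  by have := HA x => /forallP/(_ y)/implyP/(_ axy); rewrite !ffunE.
by have := HB x => /forallP/(_ y)/implyP/(_ axy); rewrite !ffunE.
Qed.

Lemma prod_glue (k : {ffun gv -> 'I_N}) :
  \prod_(u : gv) xx (k u) =
  \prod_(x : vert A) xx ((splt k).1 x) * \prod_(y | y != Defs.root B) xx ((splt k).2 y).
Proof.
rewrite big_sumType /=; congr (_ * _); first by apply: eq_bigr => x _; rewrite ffunE.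
rewrite -big_sig_neq; apply: eq_bigr => y _; by rewrite ffunE inB_val.
Qed.

Lemma Fw_glue_gen (y : vert B) c :
  @Fw (glue_graph A B) (inB A y) c = \sum_d Fw (Defs.root A) d * U (Defs.root B) y d c.
Proof.
rewrite /Fw (reindex_onto join splt); last by move=> k _; rewrite join_splt.
pose P := fun p : fA * fB => [&& Defs.proper p.1, Defs.proper p.2, p.2 y == c
   & p.1 (Defs.root A) == p.2 (Defs.root B)].
rewrite (eq_bigl P); last first.
  move=> p; rewrite splt_join /P.
  apply/idP/idP.
    move=> /andP[/andP[Hp Hy] E].
    have E' := join_cons (eqP E).
    have Ey : join p (inB A y) = p.2 y.
      by have := congr1 (fun q : fA * fB => q.2 y) E'; rewrite /= ffunE.
    by move: Hp Hy; rewrite proper_glue E' Ey => /andP[-> ->] ->; rewrite E.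
  move=> /and4P[H1 H2 H3 E].
  have E' := join_cons (eqP E).
  have Ey : join p (inB A y) = p.2 y.
    by have := congr1 (fun q : fA * fB => q.2 y) E'; rewrite /= ffunE.
  by rewrite proper_glue E' Ey H1 H2 H3 E.
rewrite (eq_bigr (fun p : fA * fB => \prod_(x : vert A) xx (p.1 x) * \prod_(z | z != Defs.root B) xx (p.2 z))); last first.
  move=> p /and4P[_ _ _ /eqP E]; rewrite prod_glue join_cons //.
rewrite -(pair_big_dep (fun k : fA => Defs.proper k)
   (fun k1 k2 => [&& Defs.proper k2, k2 y == c & k1 (Defs.root A) == k2 (Defs.root B)])
   (fun k1 k2 => \prod_(x : vert A) xx (k1 x) * \prod_(z | z != Defs.root B) xx (k2 z))) /=.
rewrite (partition_big (fun k : fA => k (Defs.root A)) predT) //.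
apply: eq_bigr => d _; rewrite /U big_distrl /=; apply: eq_bigr => kA /andP[_ /eqP Ed].
rewrite big_distrr /=; apply: eq_bigl => kB; rewrite Ed [d == _]eq_sym.
by case: (Defs.proper kB) => //=; exact: andbC.
Qed.

End GlueL.

Lemma X_glue (A B : rooted_graph) :
  X N (glue_graph A B) = \sum_d Fw (Defs.root A) d * Fr (Defs.root B) d.
Proof.
rewrite (@X_Fw (glue_graph A B) (inB A (Defs.root B))).
under eq_bigr => c _ do rewrite Fw_glue_gen.
rewrite exchange_big /=; apply: eq_bigr => d _.
by rewrite -mulr_sumr -Fr_U.
Qed.

Lemma Fw_glue (A B : rooted_graph) d :
  @Fw (glue_graph A B) (inA B (Defs.root A)) d = Fw (Defs.root A) d * Fr (Defs.root B) d.
Proof.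
rewrite -inB_root Fw_glue_gen (bigD1 d) //= U_rr eqxx mul1r big1 ?addr0 //.
by move=> e /negbTE ne; rewrite U_rr ne mul0r mulr0.
Qed.

Definition stepv (u : 'I_N -> R) : 'I_N -> R := fun c => \sum_(e | e != c) xx e * u e.
Definition iterv m u := iter m stepv u.

Lemma iterv_eq m u w : u =1 w -> iterv m u =1 iterv m w.
Proof.
move=> E; elim: m => [|m IH] c //=; rewrite /stepv; apply: eq_bigr => e _.
by rewrite IH.
Qed.

Definition Up m d c := @U (P m.+1) ord0 ord_max d c.

Lemma Up0 d c : Up 0 d c = (d == c)%:R.
Proof.
rewrite /Up; have -> : (ord_max : 'I_1) = ord0 by apply: val_inj.
rewrite U_rr Fr_single ?mulr1 //.
by move=> u; apply: val_inj; case: u => [[]].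
Qed.

Section PathRec.
Variable m : nat.
Local Notation W := (widen_ord (leqnSn m.+1)).
Local Notation f1 := {ffun 'I_m.+1 -> 'I_N}.
Local Notation f2 := {ffun 'I_m.+2 -> 'I_N}.

Definition hP (p : f1 * 'I_N) : f2 :=
  [ffun i => if i == ord_max then p.2 else p.1 (inord i)].
Definition hP' (k : f2) : f1 * 'I_N := ([ffun j => k (W j)], k ord_max).

Lemma W_neq (j : 'I_m.+1) : (W j == ord_max) = false.
Proof. by apply/negbTE; rewrite -val_eqE /= neq_ltn ltn_ord. Qed.

Lemma hPW p j : hP p (W j) = p.1 j.
Proof. by rewrite ffunE W_neq; congr (p.1 _); apply: val_inj; rewrite /= inordK. Qed.

Lemma hPmax p : hP p ord_max = p.2.
Proof. by rewrite ffunE eqxx. Qed.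

Lemma Wsplit (i : 'I_m.+2) : i != ord_max -> i = W (inord i).
Proof.
move=> ne; apply: val_inj; rewrite /= inordK //.
by move: ne (ltn_ord i); rewrite -val_eqE /= ltnS leq_eqVlt => /negbTE ->.
Qed.

Lemma Wcase (i : 'I_m.+2) : i = ord_max \/ exists j, i = W j.
Proof.
by case: (eqVneq i ord_max) => [->|/Wsplit ->]; [left|right; eexists].
Qed.

Lemma hPK k : hP (hP' k) = k.
Proof.
apply/ffunP => i; case: (eqVneq i ord_max) => [->|ne]; first by rewrite hPmax.
by rewrite {1}(Wsplit ne) hPW /= ffunE -Wsplit.
Qed.

Lemma hP'K p : hP' (hP p) = p.
Proof.
case: p => k e; rewrite /hP' hPmax; congr (_, _).
by apply/ffunP => j; rewrite ffunE hPW.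
Qed.

Lemma proper_hP p :
  @Defs.proper (P m.+2) N (hP p) = @Defs.proper (P m.+1) N p.1 && (p.2 != p.1 ord_max).
Proof.
apply/idP/andP => [/forallP H|[/forallP HA ne]].
  split.
    apply/forallP => i; apply/forallP => j; apply/implyP => aij.
    by have := H (W i) => /forallP/(_ (W j))/implyP/(_ aij); rewrite !hPW.
  have := H ord_max => /forallP/(_ (W ord_max))/implyP.
  by rewrite hPmax hPW; apply; rewrite /= eqxx orbT.
apply/forallP => i; apply/forallP => j; apply/implyP.
case: (Wcase i) => [->|[i' ->]]; case: (Wcase j) => [->|[j' ->]].
- by rewrite /= eqn_leq ltnn.
- rewrite hPmax hPW /= => /orP[]; first by rewrite eqn_leq ltnNge ltnW.
  move=> /eqP[] E.
  suff -> : j' = ord_max by [].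
  by apply: val_inj; rewrite /= E.
- rewrite hPmax hPW /= => /orP[]; last by rewrite eqn_leq ltnNge ltnW.
  move=> /eqP[] E.
  suff -> : i' = ord_max by rewrite eq_sym.
  by apply: val_inj; rewrite /= E.
- by rewrite !hPW => aij; have := HA i' => /forallP/(_ j')/implyP; apply.
Qed.

Lemma prod_hP p :
  \prod_(u : 'I_m.+2 | u != ord0) xx (hP p u) =
  (\prod_(j : 'I_m.+1 | j != ord0) xx (p.1 j)) * xx p.2.
Proof.
rewrite big_mkcond big_ord_recr /= hPmax; congr (_ * _).
rewrite [RHS]big_mkcond; apply: eq_bigr => j _; rewrite hPW.
by [].
Qed.

Lemma UpS d c : Up m.+1 d c = xx c * \sum_(e | e != c) Up m d e.
Proof.
rewrite /Up /U (reindex_onto hP hP'); last by move=> k _; rewrite hPK.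
have W0 : (ord0 : 'I_m.+2) = W ord0 by apply: val_inj.
rewrite (eq_bigl (fun p : f1 * 'I_N => (@Defs.proper (P m.+1) N p.1 && (p.1 ord0 == d)) &&
    ((p.2 == c) && (p.2 != p.1 ord_max)))); last first.
  move=> p; rewrite hP'K eqxx andbT proper_hP hPmax W0 hPW.
  by case: (@Defs.proper (P m.+1) N p.1); case: (p.1 ord0 == d); rewrite //= andbC.
rewrite (eq_bigr (fun p : f1 * 'I_N => (\prod_(j : 'I_m.+1 | j != ord0) xx (p.1 j)) * xx p.2));
  last by move=> p _; rewrite prod_hP.
rewrite -(pair_big_dep (fun k : f1 => @Defs.proper (P m.+1) N k && (k ord0 == d))
   (fun k e => (e == c) && (e != k ord_max))
   (fun k e => (\prod_(j : 'I_m.+1 | j != ord0) xx (k j)) * xx e)) /=.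
rewrite mulr_sumr; under [RHS]eq_bigr => e _ do rewrite mulr_sumr.
rewrite (exchange_big_dep (fun k : f1 => @Defs.proper (P m.+1) N k && (k ord0 == d))) /=; last first.
  by move=> e k _ /and3P[-> -> _].
apply: eq_bigr => k /andP[pk k0].
rewrite big_mkcondr big_pred1_eq.
rewrite (eq_bigl (fun e => (e == k ord_max) && (e != c))); last first.
  by move=> e; rewrite pk k0 /= andbC eq_sym.
rewrite big_mkcondr big_pred1_eq eq_sym mulrC.
by [].
Qed.

End PathRec.

Lemma sumU (a : 'I_N -> R) m c :
  \sum_d xx d * a d * Up m d c = xx c * iterv m a c.
Proof.
elim: m c => [|m IH] c.
  rewrite (bigD1 c) //= Up0 eqxx mulr1 big1 ?addr0 // => d /negbTE ne.
  by rewrite Up0 ne mulr0.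
under eq_bigr => d _ do rewrite UpS mulrCA mulr_sumr.
rewrite -big_distrr /= exchange_big /=; congr (_ * _).
rewrite /= /stepv; apply: eq_bigr => e _.
by rewrite IH.
Qed.

Lemma Fw_pend (G : rooted_graph) m c :
  @Fw (glue_graph G (Pr m)) (@inB G (Pr m) ord_max) c
  = xx c * iterv m (Fr (Defs.root G)) c.
Proof.
rewrite Fw_glue_gen -sumU; apply: eq_bigr => d _.
by rewrite Fw_Fr.
Qed.

Lemma Fr_pend (G : rooted_graph) m c :
  @Fr (glue_graph G (Pr m)) (@inB G (Pr m) ord_max) c
  = iterv m (Fr (Defs.root G)) c.
Proof. by apply: (mulfI (xx_neq0 c)); rewrite -Fw_Fr Fw_pend. Qed.

Definition ip (u w : 'I_N -> R) : R := \sum_c xx c * u c * w c.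
Definition one : 'I_N -> R := fun _ => 1.
Definition Phi (a b g : 'I_N -> R) : R := \sum_c xx c * a c * b c * g c.

Lemma iterS' n u : iterv n.+1 u = stepv (iterv n u).
Proof. by []. Qed.

Lemma swap_neq (F : 'I_N -> 'I_N -> R) :
  \sum_c \sum_(e | e != c) F c e = \sum_e \sum_(c | c != e) F c e.
Proof.
under eq_bigr => c _ do rewrite big_mkcond.
rewrite exchange_big; apply: eq_bigr => e _; rewrite [RHS]big_mkcond.
by apply: eq_bigr => c _; rewrite eq_sym.
Qed.

Lemma ip_step u w : ip (stepv u) w = ip u (stepv w).
Proof.
rewrite /ip /stepv.
under eq_bigr => c _ do rewrite mulrAC big_distrr.
under [RHS]eq_bigr => c _ do rewrite big_distrr.
rewrite swap_neq; apply: eq_bigr => e _; apply: eq_bigr => c _.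
by rewrite /=; ring.
Qed.

Lemma ip_iter m n u w : ip (iterv m u) (iterv n w) = ip (iterv (m + n) u) w.
Proof.
elim: n m => [|n IH] m; first by rewrite addn0.
by rewrite iterS' -ip_step -iterS' IH addSnnS.
Qed.

Lemma step_alt u c : stepv u c = ip u one - xx c * u c.
Proof.
rewrite /ip /stepv [in RHS](bigD1 c) //= /one mulr1 addrC addrK.
by apply: eq_bigr => e _; rewrite mulr1.
Qed.

Lemma Phi_one a b : Phi a b one = ip a b.
Proof. by apply: eq_bigr => c _; rewrite /one mulr1. Qed.

Lemma Phi_step3 a b g :
  Phi a b (stepv g) = Phi (stepv a) b g + ip g one * ip a b - ip a one * ip b g.
Proof.
rewrite /Phi; under eq_bigr => c _ do rewrite step_alt.
under [in RHS]eq_bigr => c _ do rewrite step_alt.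
rewrite /ip [in RHS]mulr_sumr [X in _ = _ - X]mulr_sumr -big_split /= -sumrB.
by apply: eq_bigr => c _; ring.
Qed.

Definition pp i := if i is i'.+1 then ip (iterv i' one) one else 1.

Lemma alg a b g h j :
  Phi (iterv g a) (iterv h b) (iterv j one) =
  \sum_(0 <= i < j.+1) pp i * ip (iterv (g + h + j - i) a) b
  - \sum_(1 <= i < j.+1) ip (iterv (g + i - 1) a) one * ip (iterv (h + j - i) b) one.
Proof.
elim: j g => [|j IH] g.
  by rewrite big_nat1 big_geq // subr0 addn0 subn0 /= mul1r Phi_one ip_iter.
rewrite iterS' Phi_step3 -iterS' IH !ip_iter.
have E1 : \sum_(0 <= i < j.+2) pp i * ip (iterv (g + h + j.+1 - i) a) b =
  \sum_(0 <= i < j.+1) pp i * ip (iterv (g.+1 + h + j - i) a) b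
  + ip (iterv j one) one * ip (iterv (g + h) a) b.
  rewrite big_nat_recr //; congr (_ + _).
    by apply: eq_big_nat => i _; have -> : (g + h + j.+1 - i = g.+1 + h + j - i)%N by lia.
  by have -> : (g + h + j.+1 - j.+1 = g + h)%N by lia.
have E2 : \sum_(1 <= i < j.+2) ip (iterv (g + i - 1) a) one * ip (iterv (h + j.+1 - i) b) one =
  ip (iterv g a) one * ip (iterv (h + j) b) one +
  \sum_(1 <= i < j.+1) ip (iterv (g.+1 + i - 1) a) one * ip (iterv (h + j - i) b) one.
  rewrite big_nat_recl //; congr (_ + _).
    have -> : (g + 1 - 1 = g)%N by lia.
    by have -> : (h + j.+1 - 1 = h + j)%N by lia.
  apply: eq_big_nat => i _.
  have -> : (g + i.+1 - 1 = g.+1 + i - 1)%N by lia.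
  by have -> : (h + j.+1 - i.+1 = h + j - i)%N by lia.
rewrite E1 E2; ring.
Qed.

Lemma Fr_K1 c : @Fr K1 tt c = 1.
Proof. by apply: Fr_single => // -[]. Qed.

Lemma Phi_S (G H : rooted_graph) g h j :
  X N (spider g h j G H K1) =
  Phi (iterv g (Fr (Defs.root G))) (iterv h (Fr (Defs.root H))) (iterv j one).
Proof.
rewrite /spider X_glue; apply: eq_bigr => d _.
rewrite [Fw _ _](@Fw_glue (pendant G g) (pendant H h)).
by rewrite /= Fw_pend !Fr_pend (@iterv_eq j _ one Fr_K1).
Qed.

Lemma X_Pk (G H : rooted_graph) m :
  X N (Pk m G H) = ip (iterv m (Fr (Defs.root G))) (Fr (Defs.root H)).
Proof.
rewrite /Pk X_glue; apply: eq_bigr => d _.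
by rewrite /= Fw_pend.
Qed.

Lemma X_Gpow (G : rooted_graph) m :
  X N (Gpow G m) = ip (iterv m (Fr (Defs.root G))) one.
Proof.
rewrite /Gpow /pendant /= (@X_Fw (glue_graph G (Pr m)) (@inB G (Pr m) ord_max)).
by apply: eq_bigr => c _; rewrite Fw_pend /one mulr1.
Qed.

Lemma ord0_false (i : 'I_0) : False.
Proof. by case: i. Qed.

Lemma X_P i : X N (P i) = pp i.
Proof.
case: i => [|i].
  rewrite /X (big_pred1 [ffun i => False_rect 'I_N (ord0_false i)]).
    by rewrite big_ord0.
  move=> k /=; apply/idP/eqP => [_|_].
    by apply/ffunP => i; case: (ord0_false i).
  by apply/forallP => u; case: (ord0_false u).
rewrite (@X_U (P i.+1) ord0 ord_max) exchange_big /=.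
apply: eq_bigr => c _; rewrite {2}/one mulr1 -sumU; apply: eq_bigr => d _.
by rewrite /one mulr1.
Qed.

End Main.

Theorem corollary4p3 (G H : rooted_graph) (g h j : nat) :
  simple G -> simple H -> (0 < h)%N ->
  forall N : nat,
    X N (S2 g h j G H) =
      \sum_(0 <= i < j.+1) X N (P i) * X N (Pk (g + h + j - i) G H)
      - \sum_(1 <= i < j.+1) X N (Gpow G (g + i - 1)) * X N (Gpow H (h + j - i))
  /\
    X N (S1 g h j G) =
      \sum_(0 <= i < j.+1) X N (P i) * X N (Gpow G (g + j - i + h))
      - \sum_(1 <= i < j.+1) X N (P (i + h)) * X N (Gpow G (g + j - i)).
Proof.
move=> _ _ _ N; split.
  rewrite /S2 Phi_S alg; congr (_ - _).
    by apply: eq_bigr => i _; rewrite X_P X_Pk.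
  by apply: eq_bigr => i _; rewrite !X_Gpow.
rewrite /S1 Phi_S.
rewrite (_ : Phi _ _ _ = Phi (iterv g (Fr (Defs.root G))) (iterv h (@one N)) (iterv j (@one N))); last first.
  by apply: eq_bigr => c _; rewrite (@iterv_eq N h _ (@one N) (@Fr_K1 N)).
rewrite alg; congr (_ - _).
  apply: eq_big_nat => i /andP[_ hi]; rewrite X_P X_Gpow.
  by have -> : (g + j - i + h = g + h + j - i)%N by lia.
rewrite big_nat_rev /=; apply: eq_big_nat => i /andP[i1 ij].
have -> : (g + (1 + j.+1 - i.+1) - 1 = g + j - i)%N by lia.
have -> : (h + j - (1 + j.+1 - i.+1) = h + i - 1)%N by lia.
have -> : (i + h = (h + i - 1).+1)%N by lia.
by rewrite X_P X_Gpow mulrC.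
Qed.
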